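(* Let $n\ge4$. The flat twisted braid group $\mathcal{FT}_n$ has the following reduced presentation: it is isomorphic to the group $$G=\langle\, c_1, b_1, v_1,\dots,v_{n-1} \mid R\,\rangle$$ where $R$ consists of the relations $v_iv_{i+1}v_i=v_{i+1}v_iv_{i+1}$ ($1\le i\le n-2$), $v_iv_j=v_jv_i$ ($|i-j|\ge2$), $v_i^2=1$ ($1\le i\le n-1$), $c_1v_j=v_jc_1$ ($j>2$), $c_1^2=1$, $b_1^2=1$, $b_1v_j=v_jb_1$ ($j>1$), $(v_1c_1v_1)(v_2c_1v_2)(v_1c_1v_1)=(v_2c_1v_2)(v_1c_1v_1)(v_2c_1v_2)$, $c_1(v_2v_3v_1v_2c_1v_2v_1v_3v_2)=(v_2v_3v_1v_2c_1v_2v_1v_3v_2)c_1$, $b_1(v_1b_1v_1)=(v_1b_1v_1)b_1$, $c_1(v_2v_1b_1v_1v_2)=(v_2v_1b_1v_1v_2)c_1$, $(v_1b_1v_1)b_1c_1b_1(v_1b_1v_1)=v_1c_1v_1$. The isomorphism $G\to\mathcal{FT}_n$ sends $c_1,b_1,v_1,\dots,v_{n-1}$ to the elements of the same names, and its inverse sends $v_i\mapsto v_i$, $c_1\mapsto c_1$, $b_1\mapsto b_1$, $c_{i+1}\mapsto (v_i\cdots v_2v_1)(v_{i+1}\cdots v_3v_2)c_1(v_2v_3\cdots v_{i+1})(v_1v_2\cdots v_i)$ for $1\le i\le n-2$, and $b_{i+1}\mapsto(v_iv_{i-1}\cdots v_1)b_1(v_1v_2\cdots v_i)$ for $1\le i\le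 n-1$.
   Context: The flat twisted braid group $\mathcal{FT}_n$ (the group of flat twisted braids on $n$ strands: braids with flat crossings, i.e. crossings without over/under information, virtual crossings and bars on strands, under concatenation) is the group with generators $c_1,\dots,c_{n-1}$ (flat crossing of strands $i,i+1$), $v_1,\dots,v_{n-1}$ (virtual crossing) and $b_1,\dots,b_n$ (bar on strand $i$), subject to the relations: virtual relations $v_i^2=1$, $v_iv_j=v_jv_i$ ($|i-j|\ge2$), $v_iv_{i+1}v_i=v_{i+1}v_iv_{i+1}$; twisted relations $b_i^2=1$ ($1\le i\le n$), $b_ib_j=b_jb_i$ ($i\neq j$); mixed relations $b_iv_i=v_ib_{i+1}$ ($1\le i\le n-1$), $b_iv_j=v_jb_i$ ($j>i$ or $j<i-1$); flat relations $c_i^2=1$, $c_ic_{i+1}c_i=c_{i+1}c_ic_{i+1}$ ($1\le i\le n-2$), $c_ic_j=c_jc_i$ ($|i-j|\ge2$); mixed flat relations $c_iv_j=v_jc_i$ ($|i-j|\ge2$), $v_ic_{i+1}v_i=v_{i+1}c_iv_{i+1}$ ($1\le i\le n-2$), $b_ib_{i+1}c_ib_{i+1}b_i=v_ic_iv_i$ ($1\le i\le n-1$), $b_ic_j=c_jb_i$ ($j>i$ or $j<i-1$). *)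

(* Defs.v *)
From mathcomp Require Import all_boot.
Set Implicit Arguments. Unset Strict Implicit. Unset Printing Implicit Defensive.

(* A letter is a generator together with an exponent flag (true = inverse). *)

Definition letter (A : Type) := (A * bool)%type.
Definition word (A : Type) := seq (letter A).
Definition ltr (A : Type) (a : A) : letter A := (a, false).
Definition inv_word (A : Type) (w : word A) : word A :=
  rev (map (fun x : letter A => (x.1, ~~ x.2)) w).

Inductive pres_eq (A : Type) (R : word A -> word A -> Prop) : word A -> word A -> Prop :=
| pe_refl w : pres_eq R w w
| pe_sym u w : pres_eq R u w -> pres_eq R w u
| pe_trans u v w : pres_eq R u v -> pres_eq R v w -> pres_eq R u w
| pe_ctx p q u w : pres_eq R u w -> pres_eq R (p ++ u ++ q) (p ++ w ++ q)
| pe_free (x : letter A) : pres_eq R [:: x; (x.1, ~~ x.2)] [::]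
| pe_rel u w : R u w -> pres_eq R u w.

(* The monoid map on words induced by an assignment of a word to each generator
   (this is how a map on generators induces a homomorphism of free groups). *)
Definition subst (A B : Type) (f : A -> word B) (w : word A) : word B :=
  flatten (map (fun x : letter A => if x.2 then inv_word (f x.1) else f x.1) w).

(* Generators are indexed by nat (1-based, as in the paper); generators whose
   index is out of range (c_i, v_i with i not in [1,n-1], b_i with i not in
   [1,n]) are killed by a relation, which is a Tietze transformation and does
   not change the group. *)
Inductive FTgen := FTc of nat | FTv of nat | FTb of nat.

Definition fc i : letter FTgen := ltr (FTc i).
Definition fv i : letter FTgen := ltr (FTv i).
Definition fb i : letter FTgen := ltr (FTb i).

Definition far (i j : nat) : bool := (i.+2 <= j) || (j.+2 <= i).

Inductive FTrel (n : nat) : word FTgen -> word FTgen -> Prop :=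
| ft_kill_c i : ~~ (1 <= i <= n.-1) -> FTrel n [:: fc i] [::]
| ft_kill_v i : ~~ (1 <= i <= n.-1) -> FTrel n [:: fv i] [::]
| ft_kill_b i : ~~ (1 <= i <= n) -> FTrel n [:: fb i] [::]
| ft_vv i : 1 <= i <= n.-1 -> FTrel n [:: fv i; fv i] [::]
| ft_vcomm i j : 1 <= i <= n.-1 -> 1 <= j <= n.-1 -> far i j ->
    FTrel n [:: fv i; fv j] [:: fv j; fv i]
| ft_vbraid i : 1 <= i <= n.-2 ->
    FTrel n [:: fv i; fv i.+1; fv i] [:: fv i.+1; fv i; fv i.+1]
| ft_bb i : 1 <= i <= n -> FTrel n [:: fb i; fb i] [::]
| ft_bcomm i j : 1 <= i <= n -> 1 <= j <= n -> i != j ->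
    FTrel n [:: fb i; fb j] [:: fb j; fb i]
| ft_bv i : 1 <= i <= n.-1 -> FTrel n [:: fb i; fv i] [:: fv i; fb i.+1]
| ft_bvcomm i j : 1 <= i <= n -> 1 <= j <= n.-1 -> (i < j) || (j.+1 < i) ->
    FTrel n [:: fb i; fv j] [:: fv j; fb i]
| ft_cc i : 1 <= i <= n.-1 -> FTrel n [:: fc i; fc i] [::]
| ft_cbraid i : 1 <= i <= n.-2 ->
    FTrel n [:: fc i; fc i.+1; fc i] [:: fc i.+1; fc i; fc i.+1]
| ft_ccomm i j : 1 <= i <= n.-1 -> 1 <= j <= n.-1 -> far i j ->
    FTrel n [:: fc i; fc j] [:: fc j; fc i]
| ft_cvcomm i j : 1 <= i <= n.-1 -> 1 <= j <= n.-1 -> far i j ->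
    FTrel n [:: fc i; fv j] [:: fv j; fc i]
| ft_vcv i : 1 <= i <= n.-2 ->
    FTrel n [:: fv i; fc i.+1; fv i] [:: fv i.+1; fc i; fv i.+1]
| ft_bbcbb i : 1 <= i <= n.-1 ->
    FTrel n [:: fb i; fb i.+1; fc i; fb i.+1; fb i] [:: fv i; fc i; fv i]
| ft_bccomm i j : 1 <= i <= n -> 1 <= j <= n.-1 -> (i < j) || (j.+1 < i) ->
    FTrel n [:: fb i; fc j] [:: fc j; fb i].

Definition FT_eq (n : nat) := pres_eq (FTrel n).

Inductive Ggen := Gc | Gb | Gv of nat.

Definition gC : letter Ggen := ltr Gc.
Definition gB : letter Ggen := ltr Gb.
Definition gV i : letter Ggen := ltr (Gv i).

Definition gvcv i : word Ggen := [:: gV i; gC; gV i].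
Definition gX : word Ggen := [:: gV 2; gV 3; gV 1; gV 2; gC; gV 2; gV 1; gV 3; gV 2].
Definition gY : word Ggen := [:: gV 2; gV 1; gB; gV 1; gV 2].
Definition gvbv : word Ggen := [:: gV 1; gB; gV 1].

Inductive Grel (n : nat) : word Ggen -> word Ggen -> Prop :=
| g_kill_v i : ~~ (1 <= i <= n.-1) -> Grel n [:: gV i] [::]
| g_vbraid i : 1 <= i <= n.-2 ->
    Grel n [:: gV i; gV i.+1; gV i] [:: gV i.+1; gV i; gV i.+1]
| g_vcomm i j : 1 <= i <= n.-1 -> 1 <= j <= n.-1 -> far i j ->
    Grel n [:: gV i; gV j] [:: gV j; gV i]
| g_vv i : 1 <= i <= n.-1 -> Grel n [:: gV i; gV i] [::]
| g_cv j : 2 < j <= n.-1 -> Grel n [:: gC; gV j] [:: gV j; gC]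
| g_cc : Grel n [:: gC; gC] [::]
| g_bb : Grel n [:: gB; gB] [::]
| g_bv j : 1 < j <= n.-1 -> Grel n [:: gB; gV j] [:: gV j; gB]
| g_r1 : Grel n (gvcv 1 ++ gvcv 2 ++ gvcv 1) (gvcv 2 ++ gvcv 1 ++ gvcv 2)
| g_r2 : Grel n (gC :: gX) (gX ++ [:: gC])
| g_r3 : Grel n (gB :: gvbv) (gvbv ++ [:: gB])
| g_r4 : Grel n (gC :: gY) (gY ++ [:: gC])
| g_r5 : Grel n (gvbv ++ [:: gB; gC; gB] ++ gvbv) (gvcv 1).

Definition G_eq (n : nat) := pres_eq (Grel n).

Definition phi (g : Ggen) : word FTgen :=
  match g with
  | Gc => [:: fc 1]
  | Gb => [:: fb 1]
  | Gv i => [:: fv i]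
  end.

(* [gdown k m] = v_k v_(k-1) ... v_m ; [gup m k] = v_m v_(m+1) ... v_k *)
Definition gdown (k m : nat) : word Ggen := [seq gV j | j <- rev (iota m (k.+1 - m))].
Definition gup (m k : nat) : word Ggen := [seq gV j | j <- iota m (k.+1 - m)].

(* image of c_(i+1): (v_i..v_1)(v_(i+1)..v_2) c_1 (v_2..v_(i+1))(v_1..v_i) *)
Definition cimg (i : nat) : word Ggen :=
  gdown i 1 ++ gdown i.+1 2 ++ [:: gC] ++ gup 2 i.+1 ++ gup 1 i.
(* image of b_(i+1): (v_i..v_1) b_1 (v_1..v_i) *)
Definition bimg (i : nat) : word Ggen := gdown i 1 ++ [:: gB] ++ gup 1 i.

(* FT_n -> G (out-of-range generators, which are trivial in FT_n, go to 1) *)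
Definition psi (n : nat) (g : FTgen) : word Ggen :=
  match g with
  | FTv i => [:: gV i]
  | FTc i => if i == 1 then [:: gC]
             else if 2 <= i <= n.-1 then cimg i.-1 else [::]
  | FTb i => if i == 1 then [:: gB]
             else if 2 <= i <= n then bimg i.-1 else [::]
  end.

(* Main.v *)
Require Import Defs.
From mathcomp Require Import all_boot.
From Stdlib Require Import Setoid Morphisms.
From mathcomp Require Import zify.
Set Implicit Arguments. Unset Strict Implicit.

#[global] Hint Resolve pe_refl : core.
Section Gen.
Variable A : Type.
Variable R : word A -> word A -> Prop.
Local Notation "u ~ w" := (pres_eq R u w) (at level 70).

Global Instance pe_equiv : Equivalence (pres_eq R).
Proof. split; [exact: pe_refl | exact: pe_sym | exact: pe_trans]. Qed.

Lemma pe_catl p u w : u ~ w -> p ++ u ~ p ++ w.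
Proof. by move=> H; have := pe_ctx p [::] H; rewrite !cats0. Qed.
Lemma pe_catr q u w : u ~ w -> u ++ q ~ w ++ q.
Proof. by move=> H; have := pe_ctx [::] q H. Qed.

Global Instance pe_cat : Proper (pres_eq R ==> pres_eq R ==> pres_eq R) (@cat (letter A)).
Proof. move=> u u' Hu w w' Hw; etransitivity; [apply: pe_catr; exact: Hu | apply: pe_catl; exact: Hw]. Qed.

Global Instance pe_cons : Proper (eq ==> pres_eq R ==> pres_eq R) (@cons (letter A)).
Proof. move=> x y -> u w H; exact: (pe_catl [:: y] H). Qed.

Lemma rel_r u w r : R u w -> u ++ r ~ w ++ r.
Proof. by move=> H; apply: pe_catr; apply: pe_rel. Qed.

Lemma inv_word_cons (x : letter A) (w : word A) : inv_word (x :: w) = inv_word w ++ [:: (x.1, ~~ x.2)].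
Proof. by rewrite /inv_word /= rev_cons cats1. Qed.

Lemma pe_free' (x : letter A) r : x :: (x.1, ~~ x.2) :: r ~ r.
Proof. exact: (pe_catr r (pe_free R x)). Qed.

Lemma inv_cancel (w : word A) : w ++ inv_word w ~ [::].
Proof.
elim: w => [|x w IH]; first by reflexivity.
rewrite inv_word_cons /= catA.
transitivity (x :: ((w ++ inv_word w) ++ [:: (x.1, ~~ x.2)])); first by rewrite -catA; reflexivity.
by rewrite IH /= pe_free'.
Qed.

Lemma inv_cancel2 (w : word A) : inv_word w ++ w ~ [::].
Proof.
elim: w => [|x w IH]; first by reflexivity.
rewrite inv_word_cons -catA /=.
have := pe_free' (x.1, ~~ x.2) w; rewrite /= negbK -surjective_pairing => ->.
exact: IH.
Qed.

Lemma inv_wordK (w : word A) : inv_word (inv_word w) = w.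
Proof.
rewrite /inv_word map_rev revK -map_comp; elim: w => [|x w IH] //=.
by rewrite IH negbK -surjective_pairing.
Qed.

Lemma inv_word_cat (u w : word A) : inv_word (u ++ w) = inv_word w ++ inv_word u.
Proof. by rewrite /inv_word map_cat rev_cat. Qed.

Lemma pe_inv (u w : word A) : u ~ w -> inv_word u ~ inv_word w.
Proof.
move=> H.
transitivity (inv_word u ++ (w ++ inv_word w)); first by rewrite inv_cancel cats0.
rewrite catA; transitivity ((inv_word u ++ u) ++ inv_word w).
  by apply: pe_catr; apply: pe_catl; symmetry.
by rewrite inv_cancel2.
Qed.

End Gen.

Lemma subst_cat A B (f : A -> word B) u w : subst f (u ++ w) = subst f u ++ subst f w.
Proof. by rewrite /subst map_cat flatten_cat. Qed.

Lemma subst_inv A B (f : A -> word B) w : subst f (inv_word w) = inv_word (subst f w).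
Proof.
elim: w => [|x w IH] //=.
rewrite inv_word_cons subst_cat IH.
rewrite [subst f (x :: w)]/subst /= -/(subst f w) inv_word_cat.
congr (_ ++ _); rewrite /subst /= cats0.
by case: x.2 => //=; rewrite inv_wordK.
Qed.

Lemma subst_hom A B (RA : word A -> word A -> Prop) (RB : word B -> word B -> Prop) (f : A -> word B) :
  (forall u w, RA u w -> pres_eq RB (subst f u) (subst f w)) ->
  forall u w, pres_eq RA u w -> pres_eq RB (subst f u) (subst f w).
Proof.
move=> Hf u w; elim=> {u w}.
- by move=> w; reflexivity.
- by move=> u w _ H; symmetry.
- by move=> u v w _ H1 _ H2; rewrite H1.
- by move=> p q u w _ H; rewrite !subst_cat H.
- move=> [a b] /=; rewrite /subst /= !cats0.
  by case: b => /=; [rewrite inv_cancel2 | rewrite inv_cancel]; reflexivity.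
- by move=> u w H; apply: Hf.
Qed.

Unset Implicit Arguments.


Definition Cw i := cimg i.-1.
Definition Bw i := bimg i.-1.
Arguments Cw : simpl never.
Arguments Bw : simpl never.

Lemma gdown_S k m : m <= k.+1 -> gdown k.+1 m = gV k.+1 :: gdown k m.
Proof.
move=> H; rewrite /gdown subSn // -addn1 iotaD rev_cat /=.
by rewrite subnKC.
Qed.

Lemma gup_S m k : m <= k.+1 -> gup m k.+1 = rcons (gup m k) (gV k.+1).
Proof.
move=> H; rewrite /gup subSn // -addn1 iotaD map_cat /= cats1.
by rewrite subnKC.
Qed.

Lemma Cw1 : Cw 1 = [:: gC]. Proof. by []. Qed.
Lemma Bw1 : Bw 1 = [:: gB]. Proof. by []. Qed.

Lemma Bw_S i r : 1 <= i -> Bw i.+1 ++ r = gV i :: Bw i ++ gV i :: r.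
Proof.
case: i => // i _; rewrite /Bw /bimg /= gdown_S // gup_S //= -cats1 -!catA /= -!catA /= //.
Qed.

Lemma Cw_S i : 1 <= i -> Cw i.+1 =
  gV i :: gdown i.-1 1 ++ gV i.+1 :: gdown i 2 ++ gC :: gup 2 i ++ gV i.+1 :: gup 1 i.-1 ++ [:: gV i].
Proof.
case: i => // i _; rewrite /Cw /cimg (@gdown_S i 1) // (@gdown_S i.+1 2) //.
rewrite (@gup_S 2 i.+1) // (@gup_S 1 i) //.
by rewrite -!cats1 -!catA /= //.
Qed.

Section G.
Variable n : nat.
Hypothesis n4 : 4 <= n.
Local Notation "u ~ w" := (pres_eq (Grel n) u w) (at level 70).

Lemma VV k r : 1 <= k <= n.-1 -> gV k :: gV k :: r ~ r.
Proof. by move=> *; apply: (@rel_r _ _ [:: gV k; gV k] [::] r); constructor. Qed.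
Lemma Vcomm i j r : 1 <= i <= n.-1 -> 1 <= j <= n.-1 -> far i j ->
  gV i :: gV j :: r ~ gV j :: gV i :: r.
Proof. by move=> *; apply: (@rel_r _ _ [:: gV i; gV j] [:: gV j; gV i] r); constructor. Qed.
Lemma Vbraid i r : 1 <= i <= n.-2 ->
  gV i :: gV i.+1 :: gV i :: r ~ gV i.+1 :: gV i :: gV i.+1 :: r.
Proof. by move=> *; apply: (@rel_r _ _ [:: gV i; gV i.+1; gV i] [:: gV i.+1; gV i; gV i.+1] r); constructor. Qed.
Lemma CVc j r : 2 < j <= n.-1 -> gC :: gV j :: r ~ gV j :: gC :: r.
Proof. by move=> *; apply: (@rel_r _ _ [:: gC; gV j] [:: gV j; gC] r); constructor. Qed.
Lemma BVc j r : 1 < j <= n.-1 -> gB :: gV j :: r ~ gV j :: gB :: r.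
Proof. by move=> *; apply: (@rel_r _ _ [:: gB; gV j] [:: gV j; gB] r); constructor. Qed.
Lemma CC r : gC :: gC :: r ~ r.
Proof. by move=> *; apply: (@rel_r _ _ [:: gC; gC] [::] r); constructor. Qed.
Lemma BB r : gB :: gB :: r ~ r.
Proof. by move=> *; apply: (@rel_r _ _ [:: gB; gB] [::] r); constructor. Qed.

Lemma Vpast s k r : (forall j, j \in s -> (1 <= j <= n.-1) && far j k) -> 1 <= k <= n.-1 ->
  map gV s ++ gV k :: r ~ gV k :: map gV s ++ r.
Proof.
move=> Hs Hk; elim: s Hs => [|j s IH] Hs //=.
have /andP [Hj Hf] := Hs j (mem_head _ _).
rewrite IH; last by move=> l Hl; apply: Hs; rewrite in_cons Hl orbT.
by rewrite Vcomm.
Qed.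


Lemma Cw_def i : 1 <= i -> Cw i = gdown i.-1 1 ++ gdown i 2 ++ gC :: gup 2 i ++ gup 1 i.-1.
Proof. by case: i. Qed.

Ltac norm := repeat (rewrite -catA /=).
Ltac memside := let j := fresh in move=> j; rewrite ?mem_rev mem_iota /far; lia.

Lemma C_succ i r : 1 <= i -> i.+1 <= n.-1 ->
  Cw i.+1 ++ r ~ gV i :: gV i.+1 :: Cw i ++ gV i.+1 :: gV i :: r.
Proof.
move=> H1 H2; rewrite Cw_S // Cw_def //; norm.
rewrite /gdown /gup (Vpast (rev (iota 1 (i.-1.+1 - 1)))); [|memside|lia].
by rewrite -(Vpast (iota 1 (i.-1.+1 - 1)) i.+1); [|memside|lia].
Qed.

Ltac sc := unfold far; lia.

Lemma CV_hi i k r : 1 <= i -> i.+2 <= k -> k <= n.-1 -> gV k :: Cw i ++ r ~ Cw i ++ gV k :: r.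
Proof.
elim: i r => [|i IH] r // H1 H2 H3.
case: (posnP i) => [->|Hi].
  by rewrite Cw1 /= CVc //; lia.
rewrite (C_succ i r) ?(C_succ i (gV k :: r)); try sc.
rewrite (Vcomm k i); try sc. rewrite (Vcomm k i.+1); try sc.
rewrite IH; try sc.
rewrite (Vcomm k i.+1); try sc. by rewrite (Vcomm k i); try sc.
Qed.

Lemma I1 k r : 1 <= k -> k.+2 <= n.-1 ->
  gV k :: gV k.+1 :: gV k.+2 :: gV k :: gV k.+1 :: r ~
  gV k.+1 :: gV k.+2 :: gV k :: gV k.+1 :: gV k.+2 :: r.
Proof.
move=> H1 H2.
rewrite (Vcomm k.+2 k (gV k.+1 :: r)); try sc.
rewrite (Vbraid k (gV k.+2 :: gV k.+1 :: r)); try sc.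
rewrite (Vbraid k.+1 r); try sc.
by rewrite (Vcomm k k.+2 (gV k.+1 :: gV k.+2 :: r)); try sc.
Qed.

Lemma I2 k r : 1 <= k -> k.+2 <= n.-1 ->
  gV k.+2 :: gV k.+1 :: gV k :: gV k.+2 :: gV k.+1 :: r ~
  gV k.+1 :: gV k :: gV k.+2 :: gV k.+1 :: gV k :: r.
Proof.
move=> H1 H2.
rewrite (Vcomm k k.+2 (gV k.+1 :: r)); try sc.
rewrite -(Vbraid k.+1 (gV k :: gV k.+1 :: r)); try sc.
rewrite -(Vbraid k r); try sc.
by rewrite (Vcomm k.+2 k (gV k.+1 :: gV k :: r)); try sc.
Qed.

Lemma CV_lo k i r : 1 <= k -> k.+2 <= i -> i <= n.-1 -> gV k :: Cw i ++ r ~ Cw i ++ gV k :: r.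
Proof.
elim: i r => [|i IH] r // H1 H2 H3.
case: (ltngtP i k.+1) => Hik; first by lia.
- rewrite (C_succ i r) ?(C_succ i (gV k :: r)); try sc.
  rewrite (Vcomm k i); try sc. rewrite (Vcomm k i.+1); try sc.
  rewrite IH; try sc.
  rewrite (Vcomm k i.+1); try sc. by rewrite (Vcomm k i); try sc.
- subst i.
  rewrite (C_succ k.+1 r) ?(C_succ k.+1 (gV k :: r)); try sc.
  rewrite (C_succ k (gV k.+2 :: gV k.+1 :: r)) ?(C_succ k (gV k.+2 :: gV k.+1 :: gV k :: r)); try sc.
  rewrite (I1 k); try sc.
  rewrite (CV_hi k k.+2); try sc.
  by rewrite (I2 k); try sc.
Qed.

Lemma Cw2 : Cw 2 = [:: gV 1; gV 2; gC; gV 2; gV 1]. Proof. by []. Qed.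
Lemma Cw3 : Cw 3 = [:: gV 2; gV 1; gV 3; gV 2; gC; gV 2; gV 3; gV 1; gV 2]. Proof. by []. Qed.
Lemma Bw2 : Bw 2 = [:: gV 1; gB; gV 1]. Proof. by []. Qed.
Lemma Bw3 : Bw 3 = [:: gV 2; gV 1; gB; gV 1; gV 2]. Proof. by []. Qed.

Lemma CCw i r : 1 <= i <= n.-1 -> Cw i ++ Cw i ++ r ~ r.
Proof.
elim: i r => [|i IH] r // H.
case: (posnP i) => [->|Hi]; first by rewrite Cw1 /= CC.
rewrite (C_succ i (Cw i.+1 ++ r)) ?(C_succ i r); try sc.
rewrite /= (VV i); try sc. rewrite (VV i.+1); try sc.
rewrite IH; try sc. rewrite (VV i.+1); try sc. by rewrite (VV i); try sc.
Qed.

Lemma BBw i r : 1 <= i <= n -> Bw i ++ Bw i ++ r ~ r.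
Proof.
elim: i r => [|i IH] r // H.
case: (posnP i) => [->|Hi]; first by rewrite Bw1 /= BB.
rewrite !(Bw_S i) //=.
rewrite (VV i); try sc. rewrite IH; try sc. by rewrite (VV i); try sc.
Qed.

Lemma VB_lo a k r : 1 <= a -> a < k -> k <= n.-1 -> gV k :: Bw a ++ r ~ Bw a ++ gV k :: r.
Proof.
elim: a r => [|a IH] r // H1 H2 H3.
case: (posnP a) => [->|Ha]; first by rewrite Bw1 /= BVc //; lia.
rewrite !(Bw_S a) //=.
rewrite (Vcomm k a); try sc. rewrite IH; try sc. by rewrite (Vcomm k a); try sc.
Qed.

Lemma VB_hi k a r : 1 <= k -> k.+2 <= a -> a <= n -> gV k :: Bw a ++ r ~ Bw a ++ gV k :: r.
Proof.
elim: a r => [|a IH] r // H1 H2 H3.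
case: (ltngtP a k.+1) => Hak; first by lia.
- rewrite !(Bw_S a) /=; try lia.
  rewrite (Vcomm k a); try sc. rewrite IH; try sc. by rewrite (Vcomm k a); try sc.
- subst a.
  rewrite !(Bw_S k.+1) //= !(Bw_S k) //=.
  rewrite (Vbraid k (Bw k ++ [:: gV k, gV k.+1 & r])); try sc.
  rewrite (VB_lo k k.+1); try sc.
  by rewrite (Vbraid k r); try sc.
Qed.

Lemma BComm i j r : 1 <= i -> i < j -> j <= n -> Bw i ++ Bw j ++ r ~ Bw j ++ Bw i ++ r.
Proof.
elim: i j r => [|i IHi] j r // H1 H2 H3.
have adj : forall r, i.+2 <= n -> Bw i.+1 ++ Bw i.+2 ++ r ~ Bw i.+2 ++ Bw i.+1 ++ r.
  move=> r' Hn.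
  case: (posnP i) => [->|Hi].
    rewrite Bw1 Bw2 /=.
    exact: (@rel_r _ _ (gB :: gvbv) (gvbv ++ [:: gB]) r' (g_r3 n)).
  rewrite !(Bw_S i) //=.
  rewrite (VB_hi i i.+2); try sc.
  rewrite IHi; try sc.
  by rewrite -(VB_hi i i.+2); try sc.
elim: j r H2 H3 => [|j IHj] r // H2 H3.
case: (ltngtP j i.+1) => Hji; first by lia.
- rewrite !(Bw_S j) /=; try lia.
  rewrite -(VB_lo i.+1 j); try sc.
  rewrite IHj; try sc.
  by rewrite (VB_lo i.+1 j); try sc.
- by subst j; apply: adj.
Qed.

Lemma c_C3 r : gC :: Cw 3 ++ r ~ Cw 3 ++ gC :: r.
Proof.
have E : forall r, Cw 3 ++ r ~ gX ++ r.
  move=> r'; rewrite Cw3 /gX /= (Vcomm 1 3); try sc. by rewrite (Vcomm 1 3 (gV 2 :: r')); try sc.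
rewrite !E.
exact: (@rel_r _ _ (gC :: gX) (gX ++ [:: gC]) r (g_r2 n)).
Qed.

Lemma c_C j r : 3 <= j -> j <= n.-1 -> gC :: Cw j ++ r ~ Cw j ++ gC :: r.
Proof.
elim: j r => [|j IH] r // H1 H2.
case: (ltngtP j 2) => Hj; first by lia.
- rewrite (C_succ j r) ?(C_succ j (gC :: r)); try sc.
  rewrite (CVc j); try sc. rewrite (CVc j.+1); try sc.
  rewrite IH; try sc.
  rewrite (CVc j.+1); try sc. by rewrite (CVc j); try sc.
- by subst j; apply: c_C3.
Qed.

Lemma CComm i j r : 1 <= i -> i.+2 <= j -> j <= n.-1 -> Cw i ++ Cw j ++ r ~ Cw j ++ Cw i ++ r.
Proof.
elim: i j r => [|i IH] j r // H1 H2 H3.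
case: (posnP i) => [->|Hi]; first by rewrite Cw1 /= c_C //; lia.
rewrite (C_succ i (Cw j ++ r)) ?(C_succ i r); try sc.
rewrite /= (CV_lo i j); try sc. rewrite (CV_lo i.+1 j); try sc.
rewrite IH; try sc.
rewrite (CV_lo i.+1 j); try sc. by rewrite (CV_lo i j); try sc.
Qed.

Lemma CBraid i r : 1 <= i <= n.-2 ->
  Cw i ++ Cw i.+1 ++ Cw i ++ r ~ Cw i.+1 ++ Cw i ++ Cw i.+1 ++ r.
Proof.
elim: i r => [|i IH] r // H.
case: (posnP i) => [->|Hi].
  rewrite Cw1 Cw2 /=.
  transitivity (gV 1 :: (gvcv 1 ++ gvcv 2 ++ gvcv 1) ++ gV 1 :: r).
    by rewrite /= (VV 1 r); try sc; rewrite (VV 1); try sc.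
  rewrite (@rel_r _ _ _ _ (gV 1 :: r) (g_r1 n)) /=.
  by [].
have P1 : forall r, Cw i.+1 ++ gV i :: gV i.+1 :: gV i.+2 :: r ~ gV i :: gV i.+1 :: gV i.+2 :: Cw i ++ r.
  move=> r'; rewrite (C_succ i); try sc.
  rewrite /= (VV i); try sc. rewrite (VV i.+1); try sc.
  by rewrite -(CV_hi i i.+2); try sc.
have P2 : forall r, Cw i.+2 ++ gV i :: gV i.+1 :: gV i.+2 :: r ~ gV i :: gV i.+1 :: gV i.+2 :: Cw i.+1 ++ r.
  move=> r'; rewrite -(CV_lo i i.+2); try sc.
  rewrite (C_succ i.+1); try sc.
  rewrite /= (VV i.+1); try sc. by rewrite (VV i.+2); try sc.
have Ins : forall X Y Z, X ++ Y ++ Z ++ r ~ X ++ Y ++ Z ++ gV i :: gV i.+1 :: gV i.+2 :: gV i.+2 :: gV i.+1 :: gV i :: r.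
  move=> X Y Z; rewrite (VV i.+2); try sc. rewrite (VV i.+1); try sc. by rewrite (VV i); try sc.
rewrite (Ins (Cw i.+1) (Cw i.+2) (Cw i.+1)) (Ins (Cw i.+2) (Cw i.+1) (Cw i.+2)).
rewrite P1 P2 P1 P2 P1 P2.
by rewrite IH; try sc.
Qed.

Lemma BBCBB i r : 1 <= i <= n.-1 ->
  Bw i ++ Bw i.+1 ++ Cw i ++ Bw i.+1 ++ Bw i ++ r ~ gV i :: Cw i ++ gV i :: r.
Proof.
elim: i r => [|i IH] r // H.
case: (posnP i) => [->|Hi].
  rewrite (BComm 1 2 (Cw 1 ++ _)); try lia. rewrite -(BComm 1 2 r); try lia.
  rewrite Bw1 Bw2 Cw1 /=.
  exact: (@rel_r _ _ (gvbv ++ [:: gB; gC; gB] ++ gvbv) (gvcv 1) r (g_r5 n)).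
have PC : forall r, Cw i.+1 ++ gV i :: gV i.+1 :: r ~ gV i :: gV i.+1 :: Cw i ++ r.
  move=> r'; rewrite (C_succ i); try sc.
  rewrite /= (VV i); try sc. by rewrite (VV i.+1); try sc.
have PB1 : forall r, Bw i.+1 ++ gV i :: gV i.+1 :: r ~ gV i :: gV i.+1 :: Bw i ++ r.
  move=> r'; rewrite (Bw_S i) //=.
  rewrite (VV i); try sc. by rewrite -(VB_lo i i.+1); try sc.
have PB2 : forall r, Bw i.+2 ++ gV i :: gV i.+1 :: r ~ gV i :: gV i.+1 :: Bw i.+1 ++ r.
  move=> r'; rewrite -(VB_hi i i.+2); try sc.
  rewrite (Bw_S i.+1) //=. by rewrite (VV i.+1); try sc.
have PV : forall r, gV i.+1 :: gV i :: gV i.+1 :: r ~ gV i :: gV i.+1 :: gV i :: r.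
  by move=> r'; rewrite (Vbraid i); try sc.
have Ins : r ~ gV i :: gV i.+1 :: gV i.+1 :: gV i :: r.
  rewrite (VV i.+1); try sc. by rewrite (VV i); try sc.
rewrite Ins.
rewrite PB1 PB2 PC PB2 PB1 PV PC PV.
by rewrite IH; try sc.
Qed.

Lemma b_C2 r : gB :: Cw 2 ++ r ~ Cw 2 ++ gB :: r.
Proof.
rewrite Cw2 /=.
transitivity (gV 1 :: gV 2 :: (gY ++ [:: gC]) ++ gV 2 :: gV 1 :: r).
  by rewrite /gY /= (VV 2 (gV 1 :: gB :: _)); try sc; rewrite (VV 1 (gB :: _)); try sc.
rewrite -(@rel_r _ _ _ _ (gV 2 :: gV 1 :: r) (g_r4 n)) /gY /=.
by rewrite (VV 2 (gV 1 :: r)); try sc; rewrite (VV 1 r); try sc.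
Qed.

Lemma b_C j r : 2 <= j -> j <= n.-1 -> gB :: Cw j ++ r ~ Cw j ++ gB :: r.
Proof.
elim: j r => [|j IH] r // H1 H2.
case: (ltngtP j 1) => Hj; first by lia.
- rewrite (C_succ j r) ?(C_succ j (gB :: r)); try sc.
  rewrite (BVc j); try sc. rewrite (BVc j.+1); try sc.
  rewrite IH; try sc.
  rewrite (BVc j.+1); try sc. by rewrite (BVc j); try sc.
- by subst j; apply: b_C2.
Qed.

Lemma BC_lo i j r : 1 <= i -> i < j -> j <= n.-1 -> Bw i ++ Cw j ++ r ~ Cw j ++ Bw i ++ r.
Proof.
elim: i j r => [|i IH] j r // H1 H2 H3.
case: (posnP i) => [->|Hi]; first by rewrite Bw1 /= b_C //; lia.
rewrite !(Bw_S i) //=.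
rewrite (CV_lo i j); try sc. rewrite IH; try sc.
by rewrite (CV_lo i j); try sc.
Qed.

Lemma B_c i r : 3 <= i -> i <= n -> Bw i ++ gC :: r ~ gC :: Bw i ++ r.
Proof.
elim: i r => [|i IH] r // H1 H2.
case: (ltngtP i 2) => Hi; first by lia.
- rewrite !(Bw_S i) /=; try lia.
  rewrite (CVc i); try sc. rewrite -IH; try sc.
  by rewrite -(CVc i); try sc.
- subst i; rewrite Bw3.
  symmetry; exact: (@rel_r _ _ (gC :: gY) (gY ++ [:: gC]) r (g_r4 n)).
Qed.

Lemma BC_hi i j r : 1 <= j -> j.+2 <= i -> i <= n -> Bw i ++ Cw j ++ r ~ Cw j ++ Bw i ++ r.
Proof.
elim: j i r => [|j IH] i r // H1 H2 H3.
case: (posnP j) => [->|Hj]; first by rewrite Cw1 /= B_c //; lia.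
rewrite (C_succ j r) ?(C_succ j (Bw i ++ r)); try sc.
rewrite -(VB_hi j i); try sc. rewrite -(VB_hi j.+1 i); try sc.
rewrite IH; try sc.
rewrite -(VB_hi j.+1 i); try sc. by rewrite -(VB_hi j i); try sc.
Qed.

Lemma VCV i r : 1 <= i <= n.-2 -> gV i :: Cw i.+1 ++ gV i :: r ~ gV i.+1 :: Cw i ++ gV i.+1 :: r.
Proof.
move=> H; rewrite (C_succ i); try sc.
rewrite (VV i); try sc. by rewrite (VV i r); try sc.
Qed.

Lemma BV i r : 1 <= i <= n.-1 -> Bw i ++ gV i :: r ~ gV i :: Bw i.+1 ++ r.
Proof.
move=> H; rewrite (Bw_S i) /=; try lia.
by rewrite (VV i); try sc.
Qed.

End G.


Lemma substE A B (f : A -> word B) (a : A) (w : word A) : subst f (ltr a :: w) = f a ++ subst f w.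
Proof. by []. Qed.
Lemma subst0 A B (f : A -> word B) : subst f [::] = [::].
Proof. by []. Qed.

Ltac sc := unfold far; lia.

Section FT.
Variable n : nat.
Hypothesis n4 : 4 <= n.
Local Notation "u ≈ w" := (pres_eq (FTrel n) u w) (at level 70).

Lemma fVV i r : 1 <= i <= n.-1 -> fv i :: fv i :: r ≈ r.
Proof. by move=> *; apply: (@rel_r _ _ [:: fv i; fv i] [::] r); constructor. Qed.
Lemma fVCV i r : 1 <= i <= n.-2 -> fv i :: fc i.+1 :: fv i :: r ≈ fv i.+1 :: fc i :: fv i.+1 :: r.
Proof. by move=> *; apply: (@rel_r _ _ [:: fv i; fc i.+1; fv i] [:: fv i.+1; fc i; fv i.+1] r); constructor. Qed.
Lemma fBV i r : 1 <= i <= n.-1 -> fb i :: fv i :: r ≈ fv i :: fb i.+1 :: r.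
Proof. by move=> *; apply: (@rel_r _ _ [:: fb i; fv i] [:: fv i; fb i.+1] r); constructor. Qed.
Lemma fBcomm i j r : 1 <= i <= n -> 1 <= j <= n -> i != j -> fb i :: fb j :: r ≈ fb j :: fb i :: r.
Proof. by move=> *; apply: (@rel_r _ _ [:: fb i; fb j] [:: fb j; fb i] r); constructor. Qed.
Lemma fCbraid i r : 1 <= i <= n.-2 -> fc i :: fc i.+1 :: fc i :: r ≈ fc i.+1 :: fc i :: fc i.+1 :: r.
Proof. by move=> *; apply: (@rel_r _ _ [:: fc i; fc i.+1; fc i] [:: fc i.+1; fc i; fc i.+1] r); constructor. Qed.

Lemma phi_rel u w : Grel n u w -> FT_eq n (subst phi u) (subst phi w).
Proof.
case=> [i H|i H|i j Hi Hj Hf|i H|j H| | |j H| | | | |]; rewrite /subst /=.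
- by apply: pe_rel; constructor.
- by apply: pe_rel; constructor.
- by apply: pe_rel; constructor.
- by apply: pe_rel; constructor.
- by apply: pe_rel; constructor; try sc.
- by apply: pe_rel; constructor; lia.
- by apply: pe_rel; constructor; lia.
- by apply: pe_rel; constructor; lia.
- rewrite -!(fVCV 1); try sc. rewrite !(fVV 1); try sc.
  by rewrite (fCbraid 1); try sc.
- have E : forall r, [:: fv 2, fv 3, fv 1, fv 2, fc 1, fv 2, fv 1, fv 3, fv 2 & r] ≈ fc 3 :: r.
    move=> r; rewrite -(fVCV 1); try sc. rewrite !(fVV 1); try sc.
    rewrite -(fVCV 2); try sc. by rewrite !(fVV 2); try sc.
  rewrite E (E [:: fc 1]).
  by apply: (@rel_r _ _ [:: fc 1; fc 3] [:: fc 3; fc 1] [::]); constructor; try sc.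
- have E : forall r, [:: fv 1, fb 1, fv 1 & r] ≈ fb 2 :: r.
    by move=> r; rewrite (fBV 1); try sc; rewrite (fVV 1); try sc.
  rewrite E (E [:: fb 1]).
  by apply: (@rel_r _ _ [:: fb 1; fb 2] [:: fb 2; fb 1] [::]); constructor; try sc.
- have E : forall r, [:: fv 2, fv 1, fb 1, fv 1, fv 2 & r] ≈ fb 3 :: r.
    move=> r; rewrite (fBV 1); try sc; rewrite (fVV 1); try sc.
    by rewrite (fBV 2); try sc; rewrite (fVV 2); try sc.
  rewrite E (E [:: fc 1]).
  by symmetry; apply: (@rel_r _ _ [:: fb 3; fc 1] [:: fc 1; fb 3] [::]); constructor; try sc.
- have E : forall r, [:: fv 1, fb 1, fv 1 & r] ≈ fb 2 :: r.
    by move=> r; rewrite (fBV 1); try sc; rewrite (fVV 1); try sc.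
  rewrite E E (fBcomm 2 1); try sc. rewrite (fBcomm 1 2 [::]); try sc.
  by apply: (@rel_r _ _ [:: fb 1; fb 2; fc 1; fb 2; fb 1] [:: fv 1; fc 1; fv 1] [::]); constructor; try sc.
Qed.

Lemma phi_hom u w : G_eq n u w -> FT_eq n (subst phi u) (subst phi w).
Proof. exact: subst_hom phi_rel u w. Qed.


Lemma psi_c i : 1 <= i <= n.-1 -> psi n (FTc i) = Cw i.
Proof. by move=> H /=; case: ifP => [/eqP -> //| /eqP Hne]; rewrite ifT //; lia. Qed.
Lemma psi_c0 i : ~~ (1 <= i <= n.-1) -> psi n (FTc i) = [::].
Proof. by move=> H /=; case: ifP => [/eqP E|_]; [lia| case: ifP => // Hc; lia]. Qed.
Lemma psi_b i : 1 <= i <= n -> psi n (FTb i) = Bw i.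
Proof. by move=> H /=; case: ifP => [/eqP -> //| /eqP Hne]; rewrite ifT //; lia. Qed.
Lemma psi_b0 i : ~~ (1 <= i <= n) -> psi n (FTb i) = [::].
Proof. by move=> H /=; case: ifP => [/eqP E|_]; [lia| case: ifP => // Hc; lia]. Qed.

Lemma phiC i : 1 <= i <= n.-1 -> subst phi (Cw i) ≈ [:: fc i].
Proof.
elim: i => [|i IH] // H.
case: (posnP i) => [->|Hi]; first by rewrite Cw1.
have := phi_hom _ _ (C_succ n n4 i [::] Hi ltac:(lia)); rewrite cats0 => ->.
rewrite !substE subst_cat IH; try lia.
rewrite /subst /= -(fVCV i); try sc. rewrite (fVV i); try sc. by rewrite (fVV i); try sc.
Qed.

Lemma phiB i : 1 <= i <= n -> subst phi (Bw i) ≈ [:: fb i].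
Proof.
elim: i => [|i IH] // H.
case: (posnP i) => [->|Hi]; first by rewrite Bw1.
have := Bw_S i [::] Hi; rewrite cats0 => ->.
rewrite !substE subst_cat IH; try lia.
rewrite /subst /= (fBV i); try sc. by rewrite (fVV i); try sc.
Qed.


Lemma psi_rel u w : FTrel n u w -> G_eq n (subst (psi n) u) (subst (psi n) w).
Proof.
case=> [i H|i H|i H|i H|i j Hi Hj Hf|i H|i H|i j Hi Hj Hne|i H|i j Hi Hj Hij
       |i H|i H|i j Hi Hj Hf|i j Hi Hj Hf|i H|i H|i j Hi Hj Hij];
  rewrite !substE subst0.
- by rewrite psi_c0.
- by apply: pe_rel; constructor.
- by rewrite psi_b0.
- by apply: pe_rel; constructor.
- by apply: pe_rel; constructor.
- by apply: pe_rel; constructor.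
- by rewrite psi_b //; apply: BBw; lia.
- rewrite !psi_b //. case: (ltngtP i j) => Hc.
  + by apply: BComm; lia.
  + by symmetry; apply: BComm; lia.
  + by move: Hne; rewrite Hc eqxx.
- rewrite !psi_b //=; try lia. by apply: BV; lia.
- rewrite !psi_b //=. symmetry. case/orP: Hij => Hij; [apply: VB_lo| apply: VB_hi]; lia.
- by rewrite psi_c //; apply: CCw; lia.
- rewrite !psi_c //; try lia. by apply: CBraid; lia.
- rewrite !psi_c //. case/orP: Hf => Hf; [apply: CComm | symmetry; apply: CComm]; lia.
- rewrite !psi_c //=. symmetry; case/orP: Hf => Hf; [apply: CV_hi | apply: CV_lo]; lia.
- rewrite !psi_c //=; try lia. by apply: VCV; lia.
- rewrite !psi_c // !psi_b //=; try lia. by apply: BBCBB; lia.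
- rewrite !psi_c // !psi_b //. case/orP: Hij => Hij; [apply: BC_lo | apply: BC_hi]; lia.
Qed.

End FT.

Lemma subst1 A B (f : A -> word B) (a : A) (b : bool) :
  subst f [:: (a, b)] = if b then inv_word (f a) else f a.
Proof. by rewrite /subst /= cats0. Qed.

Lemma phipsi n (n4 : 4 <= n) a : FT_eq n (subst phi (psi n a)) [:: ltr a].
Proof.
case: a => i.
- case: (boolP (1 <= i <= n.-1)) => H.
    by rewrite psi_c // phiC.
  by rewrite psi_c0 //; symmetry; apply: pe_rel; constructor.
- by [].
- case: (boolP (1 <= i <= n)) => H.
    by rewrite psi_b // phiB.
  by rewrite psi_b0 //; symmetry; apply: pe_rel; constructor.
Qed.

Theorem theorem11 (n : nat) : 4 <= n ->
  (forall u w : word Ggen, G_eq n u w -> FT_eq n (subst phi u) (subst phi w)) /\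
  (forall u w : word FTgen, FT_eq n u w -> G_eq n (subst (psi n) u) (subst (psi n) w)) /\
  (forall u : word Ggen, G_eq n (subst (psi n) (subst phi u)) u) /\
  (forall u : word FTgen, FT_eq n (subst phi (subst (psi n) u)) u).
Proof.
move=> n4; split; first exact: phi_hom.
split; first exact: (subst_hom (psi_rel n n4)).
split.
- elim=> [|[g b] u IH]; first by [].
  rewrite -[_ :: u]cat1s !subst_cat IH.
  by case: g b => [||i] [].
- elim=> [|[g b] u IH]; first by [].
  rewrite -[_ :: u]cat1s !subst_cat IH.
  case: b => /=; rewrite cats0.
  + by rewrite subst_inv (pe_inv (phipsi n n4 g)).
  + by rewrite (phipsi n n4 g).
Qed.
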